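(* Let $G$ be a graph with no isolated vertex and $H$ a nontrivial graph with $\gamma(H)=1$. Then there exists a $\gamma_{(1,0,0)}^s(G\circ H)$-function $f$ such that $f(V(H_u))=\sum_{y\in V(H)}f(u,y)\le2$ for every $u\in V(G)$.
   Context: All graphs are finite and simple; nontrivial means at least two vertices; $\gamma(H)$ is the domination number. For a graph $G$, a function $f:V(G)\to\{0,1,2\}$ is a $(1,0,0)$-dominating function if every vertex $v$ with $f(v)=0$ satisfies $\sum_{u\in N(v)}f(u)\ge1$ ($N(v)$ the open neighbourhood). For adjacent $v,u$ with $f(v)=0$, $f(u)>0$, $f_{u\to v}$ is defined by $f_{u\to v}(v)=1$, $f_{u\to v}(u)=f(u)-1$, $f_{u\to v}(x)=f(x)$ otherwise. $f$ is a secure $(1,0,0)$-dominating function if it is $(1,0,0)$-dominating and for every $v$ with $f(v)=0$ there is $u\in N(v)$ with $f(u)>0$ such that $f_{u\to v}$ is $(1,0,0)$-dominating. $\gamma_{(1,0,0)}^s(G)$ (the weak Roman domination number) is the minimum of $\sum_v f(v)$ over such functions, and a $\gamma_{(1,0,0)}^s(G)$-function is one attaining this minimum. The lexicographic product $G\circ H$ has vertex set $V(G)\times V(H)$, with $(u,v)(x,y)$ an edge iff $ux\in E(G)$, or $u=x$ and $vy\in E(H)$; $H_u$ is the subgraph induced by $\{u\}\times V(H)$. *)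

(* Defs.v *)
From mathcomp Require Import all_boot.
Set Implicit Arguments. Unset Strict Implicit. Unset Printing Implicit Defensive.

Record sgraph (T : finType) := SGraph {
  adj : rel T;
  adj_sym : symmetric adj;
  adj_irrefl : irreflexive adj }.

Definition nbhd (T : finType) (G : sgraph T) (v : T) : {set T} :=
  [set u | adj G v u].

Definition no_isolated (T : finType) (G : sgraph T) : Prop :=
  forall v : T, exists u, adj G v u.

(* domination number: minimum size of a dominating set (V(G) itself dominates) *)
Definition gamma (T : finType) (G : sgraph T) : nat :=
  \big[minn/#|T|]_(D : {set T} | [forall v, (v \in D) || [exists u in D, adj G v u]]) #|D|.

(* functions V -> {0,1,2}, represented as nat-valued with values <= 2 *)
Definition labelling (T : finType) (f : T -> nat) : Prop := forall v, f v <= 2.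

Definition weight (T : finType) (f : T -> nat) : nat := \sum_(v : T) f v.

Definition dom100 (T : finType) (G : sgraph T) (f : T -> nat) : Prop :=
  forall v, f v = 0 -> 1 <= \sum_(u in nbhd G v) f u.

Definition fmove (T : finType) (f : T -> nat) (u v : T) : T -> nat :=
  fun x => if x == v then 1 else if x == u then (f u).-1 else f x.

Definition secure_dom100 (T : finType) (G : sgraph T) (f : T -> nat) : Prop :=
  labelling f /\ dom100 G f /\
  forall v, f v = 0 ->
    exists u, [/\ adj G v u, 0 < f u & dom100 G (fmove f u v)].

Definition wrd_function (T : finType) (G : sgraph T) (f : T -> nat) : Prop :=
  secure_dom100 G f /\
  forall g : T -> nat, secure_dom100 G g -> weight f <= weight g.

Definition lex_adj (T1 T2 : finType) (G : sgraph T1) (H : sgraph T2) :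
  rel (prod T1 T2) :=
  fun p q => adj G p.1 q.1 || ((p.1 == q.1) && adj H p.2 q.2).

Lemma lex_adj_sym T1 T2 (G : sgraph T1) (H : sgraph T2) :
  symmetric (lex_adj G H).
Proof.
move=> [a b] [c d]; rewrite /lex_adj /=.
by rewrite [adj G a c]adj_sym [adj H b d]adj_sym [a == c]eq_sym.
Qed.

Lemma lex_adj_irrefl T1 T2 (G : sgraph T1) (H : sgraph T2) :
  irreflexive (lex_adj G H).
Proof. by move=> [a b]; rewrite /lex_adj /= (adj_irrefl G a) (adj_irrefl H b) andbF. Qed.

Definition lexprod (T1 T2 : finType) (G : sgraph T1) (H : sgraph T2) :
  sgraph (prod T1 T2) :=
  @SGraph _ (lex_adj G H) (lex_adj_sym G H) (lex_adj_irrefl G H).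

(* Main.v *)
Require Import Defs.
From mathcomp Require Import all_boot.
From Stdlib Require Import Classical.
Set Implicit Arguments. Unset Strict Implicit.

Lemma gamma1_dom (T : finType) (H : sgraph T) :
  gamma H = 1 -> exists h, forall y, (y == h) || adj H y h.
Proof.
rewrite /gamma => E.
have : exists D : {set T}, [forall v, (v \in D) || [exists u in D, adj H v u]]
        /\ #|D| = 1.
  rewrite -E; apply: (big_ind (fun x => exists D : {set T},
     [forall v, (v \in D) || [exists u in D, adj H v u]] /\ #|D| = x)).
  - exists setT; split; last by rewrite cardsT.
    by apply/forallP => v; rewrite in_setT.
  - move=> x y Hx Hy; rewrite /minn; by case: ifP.
  - move=> D HD; by exists D.
move=> [D [HD /eqP /cards1P [h Dh]]].
exists h => y; move/forallP: HD => /(_ y); rewrite Dh in_set1.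
case/orP => [->//|/existsP [z /andP [] ]].
by rewrite in_set1 => /eqP -> ->; rewrite orbT.
Qed.

Lemma sum_ge (T : finType) (A : {set T}) (F : T -> nat) q :
  q \in A -> F q <= \sum_(x in A) F x.
Proof. by move=> qA; rewrite (bigD1 q) //= leq_addr. Qed.

Section Main.
Variables (T1 T2 : finType) (G : sgraph T1) (H : sgraph T2).
Variables (u : T1) (h : T2).
Hypothesis hdom : forall y, (y == h) || adj H y h.

Lemma key (ff gg : T1 * T2 -> nat) :
  dom100 (lexprod G H) ff -> 1 <= gg (u, h) ->
  (forall q, q.1 != u -> gg q = ff q) -> dom100 (lexprod G H) gg.
Proof.
move=> Dff Guh Eq [w z] /= g0.
have nb : forall q : T1 * T2, lex_adj G H (w, z) q -> 
   gg q <= \sum_(x in nbhd (lexprod G H) (w, z)) gg x.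
  by move=> q Hq; apply: sum_ge; rewrite inE.
case: (eqVneq w u) => [ewu|nwu].
  rewrite ewu in g0 nb *; apply: (leq_trans Guh (nb _ _)).
  rewrite /lex_adj /= eqxx /=.
  case/orP: (hdom z) => [/eqP ezh|->]; last by rewrite orbT.
  by move: Guh; rewrite -ezh g0.
case Ga: (adj G w u).
  by apply: (leq_trans Guh (nb _ _)); rewrite /lex_adj /= Ga.
have := Dff (w, z); rewrite -Eq // g0 => /(_ erefl) /leq_trans; apply.
rewrite leq_eqVlt; apply/orP; left; apply/eqP; apply: eq_bigr => [[a b]].
move=> Hab; rewrite Eq //=; move: Hab; rewrite inE /= /lex_adj /=.
case/orP => [Hwa|/andP [/eqP <- _] //].
apply/eqP => eau; subst a; by rewrite Hwa in Ga.
Qed.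

Definition gmod (f : T1 * T2 -> nat) : T1 * T2 -> nat :=
  fun p => if p.1 == u then (if p.2 == h then 2 else 0) else f p.

Lemma gmod_secure f : secure_dom100 (lexprod G H) f ->
  secure_dom100 (lexprod G H) (gmod f).
Proof.
move=> [Lf [Df Sf]].
have Eg : forall q, q.1 != u -> gmod f q = f q.
  by move=> q /negbTE nq; rewrite /gmod nq.
have guh : gmod f (u, h) = 2 by rewrite /gmod /= !eqxx.
split; first by move=> p; rewrite /gmod; case: ifP => //; case: ifP.
split; first by apply: (key (gg := gmod f) Df); [rewrite guh | exact: Eg].
move=> [w z] g0.
have vuh : (w, z) != (u, h).
  by apply/eqP => E; move: g0; rewrite E guh.
case: (eqVneq w u) => [ewu|nwu].
  exists (u, h); split.
  - rewrite /= /lex_adj /= ewu eqxx /=.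
    case/orP: (hdom z) => [/eqP ezh|->]; last by rewrite orbT.
    by move: vuh; rewrite ewu ezh eqxx.
  - by rewrite /gmod /= !eqxx.
  apply: (key (gg := fmove (gmod f) (u, h) (w, z)) Df).
    by rewrite /fmove eq_sym (negbTE vuh) eqxx guh.
  move=> q nq; rewrite /fmove.
  have -> : (q == (w, z)) = false.
    by apply/negbTE; apply: contra nq => /eqP ->; rewrite ewu.
  have -> : (q == (u, h)) = false.
    by apply/negbTE; apply: contra nq => /eqP ->.
  exact: Eg.
have f0 : f (w, z) = 0 by rewrite -Eg.
have [x [ax fx Dx]] := Sf _ f0.
have nwu' : (w, z).1 != u by [].
case: (eqVneq x.1 u) => [exu|nxu].
  exists (u, h); split.
  - move: ax; rewrite /= /lex_adj /= -exu.
    case/orP => [->//|/andP [/eqP E _]].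
    by move: nwu; rewrite E exu eqxx.
  - by rewrite /gmod /= !eqxx.
  apply: (key (gg := fmove (gmod f) (u, h) (w, z)) Dx).
    by rewrite /fmove eq_sym (negbTE vuh) eqxx guh.
  move=> q nq; rewrite /fmove.
  case: ifP => // _.
  have -> : (q == (u, h)) = false.
    by apply/negbTE; apply: contra nq => /eqP ->.
  have -> : (q == x) = false.
    by apply/negbTE; apply: contra nq => /eqP ->; rewrite exu.
  exact: Eg.
exists x; split => //; first by rewrite Eg.
apply: (key (gg := fmove (gmod f) x (w, z)) Dx).
  rewrite /fmove eq_sym (negbTE vuh).
  have -> : ((u, h) == x) = false.
    by apply/negbTE; apply: contra nxu => /eqP <-.
  by rewrite guh.
move=> q nq; rewrite /fmove.
case: ifP => // _; case: ifP => _; first by rewrite Eg.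
exact: Eg.
Qed.

Lemma gmod_weight f : 3 <= \sum_(y : T2) f (u, y) ->
  weight (gmod f) < weight f.
Proof.
move=> H3.
have W : forall F : T1 * T2 -> nat, weight F =
   \sum_(y : T2) F (u, y) + \sum_(x | x != u) \sum_(y : T2) F (x, y).
  move=> F; rewrite /weight.
  rewrite (eq_bigr (fun p => F (p.1, p.2))); last by case.
  rewrite -(pair_bigA _ (fun a b => F (a, b))) /=.
  rewrite (bigD1 u) //=; congr (_ + _).
rewrite !W.
have -> : \sum_(y : T2) gmod f (u, y) = 2.
  rewrite (bigD1 h) //= big1 /gmod /= ?eqxx ?addn0 //.
  by move=> y /negbTE ->.
have -> : \sum_(x | x != u) \sum_(y : T2) gmod f (x, y) =
          \sum_(x | x != u) \sum_(y : T2) f (x, y).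
  apply: eq_bigr => x /negbTE nx; apply: eq_bigr => y _.
  by rewrite /gmod /= nx.
by rewrite ltn_add2r.
Qed.
End Main.

Lemma exists_min (T : finType) (G : sgraph T) :
  exists f, wrd_function G f.
Proof.
suff: forall n g, secure_dom100 G g -> weight g <= n ->
         exists f, wrd_function G f.
  move=> Hs; apply: (Hs (weight (fun _ : T => 1)) (fun _ => 1)) => //.
elim=> [|n IH] g Sg Wg.
  exists g; split => // g' _; by apply: leq_trans Wg _.
case: (classic (exists g', secure_dom100 G g' /\ weight g' < weight g)).
  move=> [g' [Sg' Wg']]; apply: (IH g' Sg').
  by rewrite -ltnS; apply: leq_trans Wg' Wg.
move=> NE; exists g; split => // g' Sg'.
rewrite leqNgt; apply/negP => Lt; apply: NE; by exists g'.
Qed.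

Theorem lemma14 (T1 T2 : finType) (G : sgraph T1) (H : sgraph T2) :
  no_isolated G -> 2 <= #|T2| -> gamma H = 1 ->
  exists f : prod T1 T2 -> nat,
    wrd_function (lexprod G H) f /\
    forall u : T1, \sum_(y : T2) f (u, y) <= 2.
Proof.
move=> _ _ /gamma1_dom [h hdom].
have [f [Sf Mf]] := exists_min (lexprod G H).
exists f; split => // u.
rewrite leqNgt; apply/negP => L.
have := gmod_weight h L; rewrite ltnNge => /negP; apply.
by apply: Mf; apply: gmod_secure.
Qed.
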